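(* For every temporal graph with static graph $G=(V,E)$, lifetime $T_{\max}$ and every $\delta\in\mathbb N^+$, the Follow algorithm (described in the context) terminates after at most $6|E| + \lceil T_{\max}/\delta\rceil$ rounds.
   Context: A temporal graph $\mathcal G=(V,E,\lambda)$ with lifetime $T_{\max}$ consists of a finite undirected static graph $(V,E)$ and a labeling $\lambda:E\to\{1,\dots,T_{\max}\}$; edge $e$ is present only at time $\lambda(e)$. Infection model with parameter $\delta\in\mathbb N^+$: a seed $(u,t)$ makes $u$ infected at time $t$; otherwise a susceptible node $u$ becomes infected at time $t$ iff some neighbour $v$ infectious at time $t$ has $\lambda(uv)=t$ (exactly one infector recorded if several exist). A node infected at time $t$ is infectious at times $t+1,\dots,t+\delta$ and resistant afterwards. Each round, the Discoverer submits seed infections and observes an infection log (triples $(u,v,t)$: $u$ infected $v$ at time $t$). Subroutine Explore$(u,t)$: for each $t'\in\{t-\delta-1,t-1,t\}$, if no round with seed $(u,t')$ was performed, perform a round with the single seed $(u,t')$ and record it; then for each newly observed successful infection along an edge $uv$ at time $t''$, call Explore$(v,t'')$. Algorithm Follow: pick any node $v_0$; for each $i\in[0,\lceil T_{\max}/\delta\rceil]$ perform a round with single seed $(v_0,i\delta)$; for each edge $e=v_0u$ along which an infection succeeds, call Explore$(u,\lambda(e))$. *)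

(* Defs.v *)
From HB Require Import structures.
From mathcomp Require Import all_boot all_order all_algebra.
Set Implicit Arguments. Unset Strict Implicit. Unset Printing Implicit Defensive.
Import Order.TTheory GRing.Theory Num.Theory.

(* A temporal graph: vertex set V (a finType), edge set E (a set of 2-element
   subsets of V), labeling lam : E -> {1..Tmax} (given on all subsets,
   constrained only on E).  Times are integers (seed times may be <= 0). *)

Section Model.
Variable V : finType.
Variables (E : {set {set V}}) (lam : {set V} -> nat) (delta : nat).

Definition infectious_at (inf : V -> option int) (v : V) (t : int) : Prop :=
  exists s, inf v = Some s /\ (s < t)%R /\ (t <= s + (Posz delta))%R.

Definition can_infect (inf : V -> option int) (v u : V) (t : int) : Prop :=
  [set v; u] \in E /\ Posz (lam [set v; u]) = t /\ infectious_at inf v t.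

(* inf u = Some t : u gets infected at time t; None : never infected. *)
Definition infection_run (a : V) (t0 : int) (inf : V -> option int) : Prop :=
  inf a = Some t0 /\
  forall u, u != a -> forall t : int,
    inf u = Some t <->
    ((exists v, can_infect inf v u t) /\
     forall t' : int, (t' < t)%R -> ~ exists v, can_infect inf v u t').

(* infection triple ((v, u), t): v infected u at time t *)
Definition valid_log (a : V) (t0 : int) (L : seq (V * V * int)) : Prop :=
  exists inf, infection_run a t0 inf /\
    (forall x, x \in L ->
       x.1.2 != a /\ inf x.1.2 = Some x.2 /\ can_infect inf x.1.1 x.1.2 x.2) /\
    (forall u t, u != a -> inf u = Some t ->
       count (fun x : V * V * int => x.1.2 == u) L = 1).
End Model.

Definition ceil_div (T d : nat) : nat := (T + d - 1) %/ d.

Section Algorithm.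
Variable V : finType.
Variables (lam : {set V} -> nat) (delta : nat).
(* obs a t = the infection log returned for a round with single seed (a, t).
   Each seed is used in at most one round, so a function suffices; the
   infector choice among several possible ones is arbitrary (obs is
   universally quantified in the theorem). *)
Variable obs : V -> int -> seq (V * V * int).

(* state = list of seeds of the rounds performed so far (in order) *)
Definition observed (s : seq (V * int)) : seq (V * V * int) :=
  flatten [seq obs p.1 p.2 | p <- s].

Fixpoint run_calls (f : seq (V * int) -> V -> int -> option (seq (V * int)))
    (s : seq (V * int)) (calls : seq (V * int)) : option (seq (V * int)) :=
  match calls with
  | [::] => Some s
  | c :: cs => match f s c.1 c.2 with
               | None => None
               | Some s' => run_calls f s' cs
               end
  end.

(* Explore(u,t) with fuel (None = fuel exhausted) *)
Fixpoint explore (fuel : nat) (s : seq (V * int)) (u : V) (t : int)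
    : option (seq (V * int)) :=
  match fuel with
  | 0 => None
  | fuel'.+1 =>
    let cand := [:: (u, (t - (Posz delta) - 1)%R); (u, (t - 1)%R); (u, t)] in
    let newr := [seq p <- cand | p \notin s] in
    let s1 := s ++ newr in
    let newtr := undup [seq x <- observed newr |
                         (x.1.1 == u) && (x \notin observed s)] in
    run_calls (explore fuel') s1 [seq (x.1.2, x.2) | x <- newtr]
  end.

Definition follow (Tmax : nat) (v0 : V) (fuel : nat) : option (seq (V * int)) :=
  let init := [seq (v0, Posz (i * delta)) | i <- iota 0 (ceil_div Tmax delta)] in
  let calls := undup [seq (x.1.2, Posz (lam [set v0; x.1.2])) |
                       x <- observed init & x.1.1 == v0] in
  run_calls (explore fuel) init calls.
End Algorithm.

(* Main.v *)
Require Import Defs.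
From mathcomp Require Import all_boot all_order all_algebra.
From mathcomp Require Import zify.
Set Implicit Arguments. Unset Strict Implicit. Unset Printing Implicit Defensive.

Definition allowed (V : finType) (E : {set {set V}}) (lam : {set V} -> nat)
  (c : V * int) : Prop :=
  exists e, e \in E /\ c.1 \in e /\ c.2 = Posz (lam e).

Definition seedl (V : finType) (E : {set {set V}}) (lam : {set V} -> nat)
  (delta : nat) : seq (V * int) :=
  flatten [seq flatten [seq [:: (w, (Posz (lam e) - Posz delta - 1)%R);
                                (w, (Posz (lam e) - 1)%R); (w, Posz (lam e))]
                       | w <- enum e] | e <- enum E].

Lemma size_flatten_le (A : eqType) (B : Type) (l : seq A) (f : A -> seq B) k :
  (forall x, x \in l -> size (f x) <= k) ->
  size (flatten (map f l)) <= k * size l.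
Proof.
elim: l => [|x l IH] H //=.
rewrite size_cat mulnS leq_add //.
  by apply: H; rewrite inE eqxx.
by apply: IH => y Hy; apply: H; rewrite inE Hy orbT.
Qed.

Lemma seedl_size (V : finType) (E : {set {set V}}) lam delta :
  (forall e, e \in E -> #|e| = 2) -> size (seedl E lam delta) <= 6 * #|E|.
Proof.
move=> HE; rewrite /seedl cardE.
apply: size_flatten_le => e He.
have : size (enum e) = 2.
  by rewrite -cardE HE // -mem_enum.
move=> Hs.
rewrite -[6]/(3 * 2) -{2}Hs.
by apply: size_flatten_le.
Qed.

Lemma allowed_seedl (V : finType) (E : {set {set V}}) lam delta u t :
  allowed E lam (u, t) ->
  [/\ (u, (t - Posz delta - 1)%R) \in seedl E lam delta,
      (u, (t - 1)%R) \in seedl E lam delta & (u, t) \in seedl E lam delta].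
Proof.
case=> e [He [/= Hu ->]].
have H : forall x, x \in [:: (u, (Posz (lam e) - Posz delta - 1)%R);
                                (u, (Posz (lam e) - 1)%R); (u, Posz (lam e))] ->
         x \in seedl E lam delta.
  move=> x Hx; apply/flatten_mapP; exists e; first by rewrite mem_enum.
  by apply/flatten_mapP; exists u; first by rewrite mem_enum.
by split; apply: H; rewrite !inE eqxx ?orbT.
Qed.

Lemma obs_good (V : finType) (E : {set {set V}}) lam delta obs
  (Hobs : forall a t, valid_log E lam delta a t (obs a t)) s x :
  x \in observed obs s ->
  [set x.1.1; x.1.2] \in E /\ Posz (lam [set x.1.1; x.1.2]) = x.2.
Proof.
case/flatten_mapP => p _ Hx.
have [inf [_ [H _]]] := Hobs p.1 p.2.
by have [_ [_ [? [? _]]]] := H x Hx.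
Qed.

Lemma count_mono (T : eqType) (s s1 l : seq T) :
  {subset s <= s1} ->
  count (fun p => p \notin s1) l <= count (fun p => p \notin s) l.
Proof.
move=> Hs; apply: sub_count => p /=; apply: contra; exact: Hs.
Qed.

Lemma count_strict (T : eqType) (s s1 l : seq T) p :
  {subset s <= s1} -> p \in l -> p \notin s -> p \in s1 ->
  count (fun p => p \notin s1) l < count (fun p => p \notin s) l.
Proof.
move=> Hs; elim: l => [|x l IH] //=.
rewrite inE => /orP [/eqP <-|Hl] Hp Hp1.
  by rewrite Hp Hp1 /= add0n add1n ltnS count_mono.
have := IH Hl Hp Hp1.
have := Hs x; case: (x \in s1); case: (x \in s) => H //=; try lia.
Qed.

Definition Pgood (V : finType) (E : {set {set V}}) lam delta f
  (F : seq (V * int) -> V -> int -> option (seq (V * int))) :=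
  forall s u t, allowed E lam (u, t) -> uniq s ->
    count (fun p => p \notin s) (seedl E lam delta) < f ->
    exists s', F s u t = Some s' /\ uniq s' /\ {subset s <= s'} /\
               {subset s' <= s ++ seedl E lam delta}.

Lemma run_calls_ok (V : finType) (E : {set {set V}}) lam delta f F :
  Pgood E lam delta f F ->
  forall calls s, (forall c, c \in calls -> allowed E lam c) -> uniq s ->
    count (fun p => p \notin s) (seedl E lam delta) < f ->
    exists s', run_calls F s calls = Some s' /\ uniq s' /\ {subset s <= s'} /\
               {subset s' <= s ++ seedl E lam delta}.
Proof.
move=> HF; elim=> [|c cs IH] s Hc Hu Hm /=.
  by exists s; split => //; split => //; split => // x Hx; rewrite mem_cat Hx.
have Hc0 : allowed E lam (c.1, c.2) by case: c Hc => ? ? Hc; apply: Hc; rewrite inE eqxx.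
have [s1 [-> [Hu1 [Hsub1 Hsub1']]]] := HF s c.1 c.2 Hc0 Hu Hm.
have Hm1 := leq_ltn_trans (count_mono _ Hsub1) Hm.
have Hcs : forall c', c' \in cs -> allowed E lam c'.
  by move=> c' Hc'; apply: Hc; rewrite inE Hc' orbT.
have [s2 [-> [Hu2 [Hsub2 Hsub2']]]] := IH s1 Hcs Hu1 Hm1.
exists s2; split => //; split => //; split; first by move=> x /Hsub1 /Hsub2.
move=> x /Hsub2'; rewrite mem_cat => /orP [/Hsub1'|] //.
by move=> H; rewrite mem_cat H orbT.
Qed.

Lemma explore_ok (V : finType) (E : {set {set V}}) lam delta obs
  (Hobs : forall a t, valid_log E lam delta a t (obs a t)) (Hd : 0 < delta) f :
  Pgood E lam delta f (explore delta obs f).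
Proof.
elim: f => [|f IH] s u t Ha Hu Hm //.
pose cand := [:: (u, (t - (Posz delta) - 1)%R); (u, (t - 1)%R); (u, t)].
pose newr := [seq p <- cand | p \notin s].
have -> : explore delta obs f.+1 s u t = run_calls (explore delta obs f) (s ++ newr)
   [seq (x.1.2, x.2) | x <- undup [seq x <- observed obs newr |
                         (x.1.1 == u) && (x \notin observed obs s)]] by [].
have [H1 H2 H3] := allowed_seedl delta Ha.
have Hcand : {subset cand <= seedl E lam delta}.
  by move=> x; rewrite !inE => /orP [/eqP ->|/orP [/eqP ->|/eqP ->]].
have Hnewr : {subset newr <= seedl E lam delta}.
  by move=> x; rewrite mem_filter => /andP [_ /Hcand].
have Hu1 : uniq (s ++ newr).
  rewrite cat_uniq Hu /=; apply/andP; split.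
    by apply/hasPn => x; rewrite mem_filter => /andP [].
  apply: filter_uniq; rewrite /cand /= !inE !negb_or !xpair_eqE !eqxx /=.
  apply/andP; split; first (apply/andP; split); apply/eqP; lia.
have Hsub1 : {subset s <= s ++ newr} by move=> x Hx; rewrite mem_cat Hx.
have Hsub1' : {subset s ++ newr <= s ++ seedl E lam delta}.
  by move=> x; rewrite !mem_cat => /orP [->|/Hnewr ->] //; rewrite orbT.
set calls := map _ _.
have Hcalls : forall c, c \in calls -> allowed E lam c.
  move=> c /mapP [x]; rewrite mem_undup mem_filter => /andP [_ Hx] ->.
  have [HeE Hl] := obs_good Hobs Hx.
  by exists [set x.1.1; x.1.2]; split => //=; split; [rewrite set22|].
case Hn: newr => [|p r].
  rewrite /calls /observed Hn /= cats0.
  by exists s; split => //; split => //; split => // x Hx; rewrite mem_cat Hx.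
have Hp : p \in newr by rewrite Hn inE eqxx.
have Hm1 : count (fun p => p \notin s ++ newr) (seedl E lam delta) < f.
  move: (Hp); rewrite mem_filter => /andP [Hps Hpc].
  have := count_strict (l := seedl E lam delta) Hsub1 (Hcand _ Hpc) Hps.
  rewrite mem_cat Hp orbT => /(_ isT) H; rewrite ltnS in Hm.
  exact: leq_trans H Hm.
rewrite -Hn.
have [s' [-> [Hu' [Hs1 Hs2]]]] := run_calls_ok IH Hcalls Hu1 Hm1.
exists s'; split => //; split => //; split; first by move=> x /Hsub1 /Hs1.
move=> x /Hs2; rewrite mem_cat => /orP [/Hsub1'|] //.
by move=> H; rewrite mem_cat H orbT.
Qed.

Theorem mainTheorem7 (V : finType) (E : {set {set V}}) (lam : {set V} -> nat)
    (Tmax delta : nat)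
    (HE : forall e, e \in E -> #|e| = 2)
    (Hlam : forall e, e \in E -> 0 < lam e <= Tmax)
    (Hdelta : 0 < delta)
    (obs : V -> int -> seq (V * V * int))
    (Hobs : forall a t, valid_log E lam delta a t (obs a t))
    (v0 : V) :
  exists fuel rounds,
    follow lam delta obs Tmax v0 fuel = Some rounds /\
    size rounds <= 6 * #|E| + ceil_div Tmax delta.
Proof.
pose init := [seq (v0, Posz (i * delta)) | i <- iota 0 (ceil_div Tmax delta)].
pose calls := undup [seq (x.1.2, Posz (lam [set v0; x.1.2])) |
                       x <- observed obs init & x.1.1 == v0].
pose fuel := (size (seedl E lam delta)).+1.
have Hf : follow lam delta obs Tmax v0 fuel = run_calls (explore delta obs fuel) init calls by [].
have Hinit : uniq init.
  rewrite map_inj_uniq ?iota_uniq // => i j [] /eqP.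
  by rewrite eqn_pmul2r // => /eqP.
have Hcalls : forall c, c \in calls -> allowed E lam c.
  move=> c; rewrite mem_undup => /mapP [x]; rewrite mem_filter => /andP [/eqP Hv Hx] ->.
  have [HeE _] := obs_good Hobs Hx.
  rewrite Hv in HeE.
  by exists [set v0; x.1.2]; split => //=; split => //; rewrite set22.
have Hm : count (fun p => p \notin init) (seedl E lam delta) < fuel
  by rewrite ltnS count_size.
have [s' [Hr [Hu' [_ Hs2]]]] := run_calls_ok (explore_ok Hobs Hdelta (f:=fuel)) Hcalls Hinit Hm.
exists fuel, s'; split; first by rewrite Hf.
apply: leq_trans (uniq_leq_size Hu' Hs2) _.
rewrite size_cat size_map size_iota addnC leq_add2r.
exact: seedl_size.
Qed.
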